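(* Let $\mathbb{F}$ be a field, let $V$ be an infinite-dimensional vector space over $\mathbb{F}$, and let $p_1,p_2,p_3\in\mathbb{F}[t]$ be split polynomials of degree $2$. Let $u$ be an endomorphism of $V$ with a dominant eigenvalue $\lambda$, and assume that $u$ is a $(p_1,p_2,p_3)$-sum. Then $\lambda$ is a $(p_1,p_2,p_3)$-sum (as a scalar) or $2\lambda=\operatorname{tr}p_1+\operatorname{tr}p_2+\operatorname{tr}p_3$.
   Context: A scalar $\lambda$ is a dominant eigenvalue of $u\in\mathrm{End}(V)$ if $\operatorname{rk}(u-\lambda\,\mathrm{id}_V)<\dim V$. An endomorphism $u$ is a $(p_1,p_2,p_3)$-sum if $u=u_1+u_2+u_3$ for some endomorphisms $u_k$ of $V$ with $p_k(u_k)=0$ for all $k$. A scalar $\lambda$ is a $(p_1,p_2,p_3)$-sum if $\lambda=x_1+x_2+x_3$ for some $x_1,x_2,x_3\in\mathbb{F}$ with $p_k(x_k)=0$ for all $k$. The trace of a monic polynomial of degree $n>0$ is the opposite of its coefficient on $t^{n-1}$; the trace $\operatorname{tr}p$ of a nonconstant polynomial $p$ with leading coefficient $\alpha$ is the trace of $\alpha^{-1}p$. *)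

(* Defs.v *)
From mathcomp Require Import all_boot all_order all_algebra.
Set Implicit Arguments. Unset Strict Implicit. Unset Printing Implicit Defensive.
Import GRing.Theory.
Local Open Scope ring_scope.

Section Defs.
Variables (F : fieldType) (V : lmodType F).

Definition lincomb (s : seq V) (c : seq F) : V :=
  \sum_(i < size s) c`_i *: s`_i.

Definition in_span (S : V -> Prop) (v : V) : Prop :=
  exists (s : seq V) (c : seq F), (forall x, x \in s -> S x) /\ v = lincomb s c.

Definition lin_free (S : V -> Prop) : Prop :=
  forall (s : seq V) (c : seq F), uniq s -> (forall x, x \in s -> S x) ->
    lincomb s c = 0 -> forall i, (i < size s)%N -> c`_i = 0.

Definition basis_of_sub (W B : V -> Prop) : Prop :=
  (forall x, B x -> W x) /\ lin_free B /\ (forall w, W w -> in_span B w).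

Definition infinite_dim : Prop :=
  ~ exists s : seq V, forall v, in_span (fun x => x \in s) v.

Definition is_endo (u : V -> V) : Prop := linear u.

Definition peval_endo (p : {poly F}) (u : V -> V) (v : V) : V :=
  \sum_(i < size p) p`_i *: iter i u v.

Definition card_leq (A B : V -> Prop) : Prop :=
  exists f : V -> V, (forall x, A x -> B (f x)) /\
    (forall x y, A x -> A y -> f x = f y -> x = y).

(* rk w < dim V : Im w has a basis of cardinality strictly less than
   that of a basis of V *)
Definition rank_lt_dim (w : V -> V) : Prop :=
  exists B C : V -> Prop,
    basis_of_sub (fun y => exists x, y = w x) B /\
    basis_of_sub (fun _ => True) C /\ ~ card_leq C B.

Definition dominant_eigenvalue (u : V -> V) (lambda : F) : Prop :=
  rank_lt_dim (fun v => u v - lambda *: v).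

Definition endo_sum3 (p1 p2 p3 : {poly F}) (u : V -> V) : Prop :=
  exists u1 u2 u3 : V -> V,
    [/\ is_endo u1, is_endo u2 & is_endo u3] /\
    (forall v, u v = u1 v + u2 v + u3 v) /\
    (forall v, peval_endo p1 u1 v = 0) /\
    (forall v, peval_endo p2 u2 v = 0) /\
    (forall v, peval_endo p3 u3 v = 0).
End Defs.

Section ScalarDefs.
Variable F : fieldType.

Definition scalar_sum3 (p1 p2 p3 : {poly F}) (lambda : F) : Prop :=
  exists x1 x2 x3 : F, lambda = x1 + x2 + x3 /\
    [/\ root p1 x1, root p2 x2 & root p3 x3].

Definition split_deg2 (p : {poly F}) : Prop :=
  size p = 3%N /\ exists a b : F, p = lead_coef p *: (('X - a%:P) * ('X - b%:P)).

(* trace of a nonconstant polynomial: minus the coefficient on t^(n-1)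
   of the monic polynomial lead_coef(p)^-1 p *)
Definition poly_trace (p : {poly F}) : F :=
  - (p`_(size p - 2) / lead_coef p).
End ScalarDefs.

(* Main.v *)
From HB Require Import structures.
Require Import Defs.
From mathcomp Require Import all_boot all_order all_algebra.
From mathcomp Require Import ring.
From mathcomp Require Import boolp classical_sets.
Import GRing.Theory.
Local Open Scope ring_scope.
Set Implicit Arguments. Unset Strict Implicit. Unset Printing Implicit Defensive.
Section TSE.
Variables (F : fieldType) (V : lmodType F).
Definition tse := (F * V)%type.
HB.instance Definition _ := GRing.Zmodule.on tse.
Definition tse_one : tse := (1, 0).
Definition tse_mul (p q : tse) : tse := (p.1 * q.1, p.1 *: q.2 + q.1 *: p.2).
Lemma tse_mulA : associative tse_mul.
Proof.
move=> [a u] [b v] [c t]; rewrite /tse_mul /=; congr (_, _); first by rewrite mulrA.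
rewrite !scalerDr !scalerA -!addrA (mulrC c a) (mulrC c b); congr (_ + _).

Qed.
Lemma tse_mulC : commutative tse_mul.
Proof. by move=> [a u] [b v]; rewrite /tse_mul /= mulrC addrC. Qed.
Lemma tse_mul1 : left_id tse_one tse_mul.
Proof. by move=> [a u]; rewrite /tse_mul /= mul1r scale1r scaler0 addr0. Qed.
Lemma tse_mulDl : left_distributive tse_mul +%R.
Proof.
move=> [a u] [b v] [c t]; rewrite /tse_mul /=; congr (_, _); first by rewrite mulrDl.
rewrite scalerDl scalerDr !addrA; congr (_ + _); rewrite -!addrA; congr (_ + _); by rewrite addrC.
Qed.
Lemma tse_one_neq0 : tse_one != 0.
Proof. by apply/eqP => -[] /eqP; rewrite oner_eq0. Qed.
HB.instance Definition _ := GRing.Zmodule_isComNzRing.Build tse tse_mulA tse_mulC tse_mul1 tse_mulDl tse_one_neq0.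

Definition kap (k : F) : tse := (k, 0).
Definition iota_ (v : V) : tse := (0, v).
Lemma kapD a b : kap (a + b) = kap a + kap b. Proof. by rewrite /kap; congr (_,_); rewrite addr0. Qed.
Lemma kapN a : kap (- a) = - kap a. Proof. by rewrite /kap; congr (_,_); rewrite oppr0. Qed.
Lemma kapM a b : kap (a * b) = kap a * kap b.
Proof. by rewrite /kap /GRing.mul /= /tse_mul /= !scaler0 addr0. Qed.
Lemma kap1 : kap 1 = 1. Proof. by []. Qed.
Lemma iotaD u v : iota_ (u + v) = iota_ u + iota_ v. Proof. by rewrite /iota_; congr (_,_); rewrite addr0. Qed.
Lemma iotaN u : iota_ (- u) = - iota_ u. Proof. by rewrite /iota_; congr (_,_); rewrite oppr0. Qed.
Lemma iotaB u v : iota_ (u - v) = iota_ u - iota_ v. Proof. by rewrite iotaD iotaN. Qed.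
Lemma iotaZ k u : iota_ (k *: u) = kap k * iota_ u.
Proof. rewrite /iota_ /kap /GRing.mul /= /tse_mul /=. congr (_,_). by rewrite mulr0. by rewrite scaler0 addr0. Qed.
Lemma iota_inj u v : iota_ u = iota_ v -> u = v. Proof. by case. Qed.
End TSE.

Ltac modring F V := apply: (@iota_inj F V);
  rewrite ?(iotaD, iotaB, iotaN, iotaZ) ?(kapD, kapN, kapM); ring.

Section Span.
Variables (F : fieldType) (V : lmodType F).
Implicit Types (S T : V -> Prop).

Definition span2 S (v : V) := exists l : seq (F * V),
  (forall p, p \in l -> S p.2) /\ v = \sum_(p <- l) p.1 *: p.2.

Lemma span2_0 S : span2 S 0.
Proof. by exists [::]; split => //; rewrite big_nil. Qed.
Lemma span2_in S v : S v -> span2 S v.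
Proof.
move=> Sv; exists [:: (1, v)]; split; last by rewrite big_seq1 scale1r.
by move=> p; rewrite inE => /eqP ->.
Qed.
Lemma span2_D S u v : span2 S u -> span2 S v -> span2 S (u + v).
Proof.
move=> [l1 [H1 ->]] [l2 [H2 ->]]; exists (l1 ++ l2); split; last by rewrite big_cat.
by move=> p; rewrite mem_cat => /orP [/H1|/H2].
Qed.
Lemma span2_Z S k v : span2 S v -> span2 S (k *: v).
Proof.
move=> [l [H ->]]; exists [seq (k * p.1, p.2) | p <- l]; split.
  by move=> p /mapP [q ql ->]; exact: H ql.
by rewrite big_map scaler_sumr; apply: eq_bigr => p _; rewrite scalerA.
Qed.
Lemma span2_N S v : span2 S v -> span2 S (- v).
Proof. by move=> H; rewrite -scaleN1r; apply: span2_Z. Qed.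
Lemma span2_B S u v : span2 S u -> span2 S v -> span2 S (u - v).
Proof. by move=> Hu Hv; apply: span2_D => //; apply: span2_N. Qed.
Lemma span2_sum S (l : seq (F * V)) : (forall p, p \in l -> span2 S p.2) ->
  span2 S (\sum_(p <- l) p.1 *: p.2).
Proof.
elim: l => [|p l IH] H; first by rewrite big_nil; apply: span2_0.
rewrite big_cons; apply: span2_D; first by apply: span2_Z; apply: H; rewrite inE eqxx.
by apply: IH => q ql; apply: H; rewrite inE ql orbT.
Qed.
Lemma span2_lin S T (f : V -> V) :
  (forall u v, f (u + v) = f u + f v) -> (forall k v, f (k *: v) = k *: f v) ->
  (forall t, S t -> span2 T (f t)) -> forall v, span2 S v -> span2 T (f v).
Proof.
move=> fD fZ fST v [l [H ->]].
have f0 : f 0 = 0 by have := fZ 0 0; rewrite !scale0r.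
have -> : f (\sum_(p <- l) p.1 *: p.2) = \sum_(p <- l) p.1 *: f p.2.
  elim: l {H} => [|p l IH]; first by rewrite !big_nil.
  by rewrite !big_cons fD fZ IH.
rewrite -(big_map (fun p => (p.1, f p.2)) xpredT (fun p => p.1 *: p.2)).
apply: span2_sum => q /mapP [p pl ->] /=; apply: fST; exact: H pl.
Qed.
Lemma span2_trans S T v : (forall t, S t -> span2 T t) -> span2 S v -> span2 T v.
Proof. by move=> H; apply: (@span2_lin S T id). Qed.
Lemma span2_scale_inv S k v : k != 0 -> span2 S (k *: v) -> span2 S v.
Proof. by move=> k0 /(@span2_Z S (k^-1)); rewrite scalerA mulVf // scale1r. Qed.
End Span.

Section Alg.
Variables (F : fieldType) (V : lmodType F).
Variables (x y z w : V -> V).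
Hypotheses (xD : forall u v, x (u + v) = x u + x v) (xZ : forall k v, x (k *: v) = k *: x v).
Hypotheses (yD : forall u v, y (u + v) = y u + y v) (yZ : forall k v, y (k *: v) = k *: y v).
Variables (d1 d2 d3 lam : F).
Hypotheses (hx : forall v, x (x v) = d1 *: x v) (hy : forall v, y (y v) = d2 *: y v)
  (hz : forall v, z (z v) = d3 *: z v) (hzdef : forall v, z v = lam *: v - x v - y v + w v).

Fixpoint applyw (s : seq bool) (v : V) : V :=
  if s is b :: s' then (if b then x else y) (applyw s' v) else v.

Definition Gen k t := exists s v, (size s <= k)%N /\ t = applyw s (w v).
Definition M k := span2 (Gen k).

Lemma xB u v : x (u - v) = x u - x v.
Proof. by rewrite -scaleN1r xD xZ scaleN1r. Qed.
Lemma yB u v : y (u - v) = y u - y v.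
Proof. by rewrite -scaleN1r yD yZ scaleN1r. Qed.

Lemma xN u : x (- u) = - x u.
Proof. by rewrite -scaleN1r xZ scaleN1r. Qed.
Lemma yN u : y (- u) = - y u.
Proof. by rewrite -scaleN1r yZ scaleN1r. Qed.

Lemma M_mono k k' v : (k <= k')%N -> M k v -> M k' v.
Proof.
move=> kk'; apply: span2_trans => t [s [u [ss ->]]]; apply: span2_in.
by exists s, u; split => //; apply: leq_trans kk'.
Qed.
Lemma M_x k v : M k v -> M k.+1 (x v).
Proof.
apply: span2_lin => // t [s [u [ss ->]]]; apply: span2_in.
by exists (true :: s), u.
Qed.
Lemma M_y k v : M k v -> M k.+1 (y v).
Proof.
apply: span2_lin => // t [s [u [ss ->]]]; apply: span2_in.
by exists (false :: s), u.
Qed.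
Lemma M_w v : M 0 (w v).
Proof. by apply: span2_in; exists [::], v. Qed.

Let c := lam + lam - d3.
Let e := lam * (lam - d3).
Definition Q v := x (y v) + y (x v) + (d1 - c) *: x v + (d2 - c) *: y v + e *: v.

Lemma Q1 v : M 1 (Q v).
Proof.
have E : Q v = - ((lam - d3) *: w v - x (w v) - y (w v) + w (z v)) + (z (z v) - d3 *: z v).
  rewrite [z (z v)]hzdef !hzdef !(xD, xB, xN, xZ, yD, yB, yN, yZ) hx hy /Q /c /e.
  modring F V.
rewrite E hz subrr addr0; apply: span2_N.
apply: span2_D; last by apply: (M_mono (leq0n 1)); apply: M_w.
apply: span2_B; last by apply: M_y; apply: M_w.
apply: span2_B; last by apply: M_x; apply: M_w.
by apply: span2_Z; apply: (M_mono (leq0n 1)); apply: M_w.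
Qed.

Definition K v := x (y v) - y (x v).
Let dl := d1 + d2 - c.
Ltac expd := rewrite ?(xD, xB, xN, xZ, yD, yB, yN, yZ, hx, hy).

Lemma K2 v : dl != 0 -> M 2 (K v).
Proof.
move=> dl0; apply: (span2_scale_inv dl0).
have -> : dl *: K v = x (Q v) - Q (x v).
  rewrite /Q /K /dl /c /e; expd; modring F V.
apply: span2_B; first by apply: M_x; apply: Q1.
by apply: (M_mono (isT : (1 <= 2)%N)); apply: Q1.
Qed.

Hypothesis dl0 : dl != 0.

Lemma S1 v : d1 * d2 + dl * d1 + (d2 - c) * d2 + e != 0 -> M 3 (x (y v)).
Proof.
move=> q0; apply: (span2_scale_inv q0).
have -> : (d1 * d2 + dl * d1 + (d2 - c) * d2 + e) *: x (y v) =
    x (y (Q v)) + x (K (y v)) + dl *: x (K v).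
  rewrite /Q /K /dl /c /e; expd; modring F V.
apply: span2_D; last by apply: span2_Z; apply: M_x; apply: K2.
apply: span2_D; last by apply: M_x; apply: K2.
by apply: M_x; apply: M_y; apply: Q1.
Qed.

Hypothesis q12 : d1 * d2 + dl * d1 + (d2 - c) * d2 + e != 0.

Lemma S2 v : (d1 - c) * d1 + e != 0 -> M 3 (x v).
Proof.
move=> q0; apply: (span2_scale_inv q0).
have -> : ((d1 - c) * d1 + e) *: x v = x (Q v) - (d1 + dl) *: x (y v) + x (K v).
  rewrite /Q /K /dl /c /e; expd; modring F V.
apply: span2_D; last by apply: M_x; apply: K2.
apply: span2_B; last by apply: span2_Z; apply: S1.
by apply: (M_mono (isT : (2 <= 3)%N)); apply: M_x; apply: Q1.
Qed.

Hypothesis q1 : (d1 - c) * d1 + e != 0.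

Lemma S3 v : (d2 - c) * d2 + e != 0 -> M 4 (y v).
Proof.
move=> q0; apply: (span2_scale_inv q0).
have -> : ((d2 - c) * d2 + e) *: y v = y (Q v) - y (x (y v)) - dl *: y (x v).
  rewrite /Q /K /dl /c /e; expd; modring F V.
apply: span2_B; last by apply: span2_Z; apply: M_y; apply: S2.
apply: span2_B; last by apply: M_y; apply: S2.
by apply: (M_mono (isT : (2 <= 4)%N)); apply: M_y; apply: Q1.
Qed.

Hypothesis q2 : (d2 - c) * d2 + e != 0.

Lemma S4 v : e != 0 -> M 4 v.
Proof.
move=> q0; apply: (span2_scale_inv q0).
have -> : e *: v = Q v - x (y v) - y (x v) - (d1 - c) *: x v - (d2 - c) *: y v.
  rewrite /Q; modring F V.
apply: span2_B; last by apply: span2_Z; apply: S3.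
apply: span2_B; last by apply: span2_Z; apply: (M_mono (isT : (3 <= 4)%N)); apply: S2.
apply: span2_B; last by apply: M_y; apply: S2.
apply: span2_B; last by apply: (M_mono (isT : (3 <= 4)%N)); apply: S1.
by apply: (M_mono (isT : (1 <= 4)%N)); apply: Q1.
Qed.
End Alg.
Section Card.
Variable T : Type.
Implicit Types (A D X : T -> Prop).

Definition injon A (h : T -> T) := forall a b, A a -> A b -> h a = h b -> a = b.
Definition mapsto A D (h : T -> T) := forall a, A a -> D (h a).

Section Compar.
Variables (A D : T -> Prop).
Let St := ((T -> Prop) * (T -> T))%type.
Let Good (p : St) := (forall t, p.1 t -> A t) /\ mapsto p.1 D p.2 /\ injon p.1 p.2.
Let Sg := {p : St | Good p}.
Let Rp (p q : St) := (forall t, p.1 t -> q.1 t) /\ (forall t, p.1 t -> q.2 t = p.2 t).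
Let R (p q : Sg) := `[< Rp (proj1_sig p) (proj1_sig q) >].

Lemma comparability : (exists h, mapsto A D h /\ injon A h) \/ (exists h, mapsto D A h /\ injon D h).
Proof.
have g0 : Good ((fun _ => False), id) by split; [move=> t [] | split; [move=> t [] | move=> t1 t2 []]].
have [m mmax] : exists m : Sg, premaximal R m.
  apply: (@ZL_preorder _ (exist _ _ g0)).
  - by move=> p; apply/asboolP; split.
  - move=> p q r /asboolP [pq1 pq2] /asboolP [qr1 qr2]; apply/asboolP; split.
      by move=> t /pq1 /qr1.
    by move=> t pt; rewrite qr2 ?pq2 //; apply: pq1.
  move=> Ch Chtot.
  pose Xu t := exists p, Ch p /\ (proj1_sig p).1 t.
  pose hu t := match pselect (Xu t) with left H => (proj1_sig (projT1 (cid H))).2 t | right _ => t end.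
  have agree p t : Ch p -> (proj1_sig p).1 t -> hu t = (proj1_sig p).2 t.
    move=> Chp pt; rewrite /hu; case: pselect => [H|[]]; last by exists p.
    have [Chq qt] := projT2 (cid H); move: (projT1 (cid H)) Chq qt => q Chq qt.
    case: (Chtot _ _ Chp Chq) => /asboolP [H1 H2]; first by rewrite H2.
    by rewrite H2.
  have common p q : Ch p -> Ch q -> exists r, [/\ Ch r, Rp (proj1_sig p) (proj1_sig r) & Rp (proj1_sig q) (proj1_sig r)].
    move=> Chp Chq; case: (Chtot _ _ Chp Chq) => /asboolP H.
      by exists q; split => //; split.
    by exists p; split => //; split.
  have gu : Good (Xu, hu).
    split; [|split] => /=.
    - by move=> t [p [_ pt]]; case: (proj2_sig p) => + _; apply.
    - move=> t [p [Chp pt]]; rewrite (agree p) //.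
      by case: (proj2_sig p) => _ [+ _]; apply.
    - move=> a b [p [Chp pa]] [q [Chq qb]].
      have [r [Chr [Hp1 _] [Hq1 _]]] := common p q Chp Chq.
      rewrite (agree r a) ?(agree r b) //; try by [apply: (Hp1)|apply: (Hq1)].
      by case: (proj2_sig r) => _ [_]; apply; [apply: (Hp1)|apply: (Hq1)].
  exists (exist _ _ gu) => p Chp; apply/asboolP; split => /=.
    by move=> t pt; exists p.
  by move=> t pt; apply: (agree).
case: (proj2_sig m) => mA [mD minj].
case: (pselect (forall a, A a -> (proj1_sig m).1 a)) => [allA|].
  left; exists (proj1_sig m).2; split.
    by move=> a /allA; apply: mD.
  by move=> a b /allA Ha /allA Hb; apply: (minj).
move=> /existsNP [a] /not_implyP [Aa nma].
case: (pselect (forall d, D d -> exists t, (proj1_sig m).1 t /\ (proj1_sig m).2 t = d)) => [allD|].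
  right; exists (fun d => match pselect (D d) with left H => projT1 (cid (allD d H)) | right _ => d end).
  split.
    move=> d Dd; case: pselect => [H|//]; have [mt _] := projT2 (cid (allD d H)); exact: mA mt.
  move=> d1 d2 Dd1 Dd2; case: pselect => [H1|//]; case: pselect => [H2|//].
  have [_ e1] := projT2 (cid (allD d1 H1)); have [_ e2] := projT2 (cid (allD d2 H2)).
  by move=> e12; rewrite -e1 -e2 e12.
move=> /existsNP [d] /not_implyP [Dd nd].
pose X' t := (proj1_sig m).1 t \/ t = a.
pose h' t := match pselect (t = a) with left _ => d | right _ => (proj1_sig m).2 t end.
have g' : Good (X', h').
  split; [|split] => /=.
  - by move=> t [/mA //| ->].
  - by move=> t [mt|->]; rewrite /h'; case: pselect => // _; apply: mD.
  - move=> t1 t2 H1 H2; rewrite /h'; case: pselect => [->|n1]; case: pselect => [->|n2] //.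
    + by move=> e; case: H2 => // mt2; case: nd; exists t2.
    + by move=> e; case: H1 => // mt1; case: nd; exists t1.
    + by case: H1 => // mt1; case: H2 => // mt2; apply: (minj).
have Rm : R m (exist _ _ g') .
  apply/asboolP; split => /=; first by move=> t mt; left.
  by move=> t mt; rewrite /h'; case: pselect => // ta; case: nma; rewrite -ta.
have /asboolP [H _] := mmax _ Rm.
by case: nma; apply: H; right.
Qed.
End Compar.

Section Hess.
Variables (B : T -> Prop) (g : nat -> T).
Hypotheses (gB : forall n, B (g n)) (ginj : injective g).

Definition mapsto2 X (f : T * T -> T) := forall a b, X a -> X b -> X (f (a, b)).
Definition injon2 X (f : T * T -> T) := forall a b a' b', X a -> X b -> X a' -> X b' ->
  f (a, b) = f (a', b') -> a = a' /\ b = b'.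

Let St := ((T -> Prop) * (T * T -> T))%type.
Let Good (p : St) := [/\ (forall t, p.1 t -> B t), (forall n, p.1 (g n)),
   mapsto2 p.1 p.2 & injon2 p.1 p.2].
Let Sg := {p : St | Good p}.
Let Rp (p q : St) := (forall t, p.1 t -> q.1 t) /\
   (forall a b, p.1 a -> p.1 b -> q.2 (a, b) = p.2 (a, b)).
Let R (p q : Sg) := `[< Rp (proj1_sig p) (proj1_sig q) >].

Lemma hessenberg : exists f : T * T -> T, mapsto2 B f /\ injon2 B f.
Proof.
pose ginv t := match pselect (exists n, g n = t) with left H => projT1 (cid H) | right _ => 0 end.
have ginvK n : ginv (g n) = n.
  rewrite /ginv; case: pselect => [H|[]]; last by exists n.
  by apply: ginj; exact: (projT2 (cid H)).
pose X0 t := exists n, g n = t.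
pose f0 (p : T * T) := g (pickle (ginv p.1, ginv p.2)).
have g0 : Good (X0, f0).
  split => /=.
  - by move=> t [n <-].
  - by move=> n; exists n.
  - by move=> a b _ _; eexists.
  - move=> a b a' b' [n <-] [m <-] [n' <-] [m' <-] /ginj /(pcan_inj pickleK).
    by rewrite !ginvK => -[-> ->].
have [m mmax] : exists m : Sg, premaximal R m.
  apply: (@ZL_preorder _ (exist _ _ g0)).
  - by move=> p; apply/asboolP; split.
  - move=> p q r /asboolP [pq1 pq2] /asboolP [qr1 qr2]; apply/asboolP; split.
      by move=> t /pq1 /qr1.
    by move=> a b pa pb; rewrite qr2 ?pq2 //; apply: pq1.
  move=> Ch Chtot.
  case: (pselect (exists p, Ch p)) => [[p0 Chp0]|nCh]; last first.
    by exists (exist _ _ g0) => p Chp; case: nCh; exists p.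
  pose Xu t := exists p, Ch p /\ (proj1_sig p).1 t.
  pose fu ab := match pselect (exists p, Ch p /\ (proj1_sig p).1 ab.1 /\ (proj1_sig p).1 ab.2) with
    left H => (proj1_sig (projT1 (cid H))).2 ab | right _ => ab.1 end.
  have agree p a b : Ch p -> (proj1_sig p).1 a -> (proj1_sig p).1 b -> fu (a, b) = (proj1_sig p).2 (a, b).
    move=> Chp pa pb; rewrite /fu; case: pselect => [H|[]]; last by exists p.
    have [Chq [qa qb]] := projT2 (cid H); move: (projT1 (cid H)) Chq qa qb => q Chq qa qb.
    case: (Chtot _ _ Chp Chq) => /asboolP [H1 H2]; first by rewrite H2.
    by rewrite H2.
  have common p q : Ch p -> Ch q -> exists r, [/\ Ch r, Rp (proj1_sig p) (proj1_sig r) & Rp (proj1_sig q) (proj1_sig r)].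
    move=> Chp Chq; case: (Chtot _ _ Chp Chq) => /asboolP H.
      by exists q; split => //; split.
    by exists p; split => //; split.
  have gu : Good (Xu, fu).
    split => /=.
    - by move=> t [p [_ pt]]; case: (proj2_sig p) => H _ _ _; exact: H pt.
    - by move=> n; exists p0; split => //; case: (proj2_sig p0) => _ + _ _.
    - move=> a b [p [Chp pa]] [q [Chq qb]].
      have [r [Chr [Hp1 _] [Hq1 _]]] := common p q Chp Chq.
      have ra := Hp1 _ pa; have rb := Hq1 _ qb.
      exists r; split => //; rewrite (agree r a b Chr ra rb).
      by case: (proj2_sig r) => _ _ + _; apply.
    - move=> a b a' b' [p1 [C1 H1]] [p2 [C2 H2]] [p3 [C3 H3]] [p4 [C4 H4]].
      have [r [Cr [R11 _] [R21 _]]] := common p1 p2 C1 C2.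
      have [r' [Cr' [R31 _] [R41 _]]] := common p3 p4 C3 C4.
      have [s [Cs [Rr _] [Rr' _]]] := common r r' Cr Cr'.
      have sa : (proj1_sig s).1 a by apply/Rr/R11.
      have sb : (proj1_sig s).1 b by apply/Rr/R21.
      have sa' : (proj1_sig s).1 a' by apply/Rr'/R31.
      have sb' : (proj1_sig s).1 b' by apply/Rr'/R41.
      rewrite (agree s a b Cs sa sb) (agree s a' b' Cs sa' sb').
      by case: (proj2_sig s) => _ _ _; apply.
  exists (exist _ _ gu) => p Chp; apply/asboolP; split => /=.
    by move=> t pt; exists p.
  by move=> a b pa pb; apply: (agree).
case: (proj2_sig m) => mB mg mmap minj.
set Xm := (proj1_sig m).1 in mB mg mmap minj *.
set fm := (proj1_sig m).2 in mmap minj *.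
have [[h [hD hinj]]|[h [hA hinj]]] := comparability Xm (fun t => B t /\ ~ Xm t).
  exfalso.
  pose Dn t := exists a, Xm a /\ h a = t.
  pose hinv t := match pselect (Dn t) with left H => projT1 (cid H) | right _ => t end.
  have hinvP t : Dn t -> Xm (hinv t) /\ h (hinv t) = t.
    by move=> Dt; rewrite /hinv; case: pselect => // H; exact: (projT2 (cid H)).
  have DnX t : Dn t -> ~ Xm t by move=> [a [Xa <-]]; case: (hD a Xa).
  pose pi t := match pselect (Xm t) with left _ => t | right _ => hinv t end.
  have piX t : Xm t \/ Dn t -> Xm (pi t).
    by rewrite /pi; case: pselect => // nX [//|/hinvP []].
  pose tg a b := match pselect (Xm a), pselect (Xm b) with
    | left _, left _ => 0 | left _, right _ => 1 | right _, left _ => 2 | right _, right _ => 3 end%N.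
  pose X' t := Xm t \/ Dn t.
  pose f' ab := match pselect (Xm ab.1 /\ Xm ab.2) with left _ => fm ab
     | right _ => h (fm (g (tg ab.1 ab.2), fm (pi ab.1, pi ab.2))) end.
  have fmX a b : X' a -> X' b -> Xm (fm (g (tg a b), fm (pi a, pi b))).
    by move=> Ha Hb; apply: (mmap); [exact: mg | apply: (mmap); exact: piX].
  have g' : Good (X', f').
    split => /=.
    - by move=> t [/mB //|[a [Xa <-]]]; case: (hD a Xa).
    - by move=> n; left.
    - move=> a b Ha Hb; rewrite /f'; case: pselect => [[Xa Xb]|_]; first by left; apply: (mmap).
      by right; eexists; split; [apply: (fmX _ _ Ha Hb) | reflexivity].
    - move=> a b a' b' Ha Hb Ha' Hb'; rewrite /f'.
      case: pselect => [[Xa Xb]|nab]; case: pselect => [[Xa' Xb']|nab'].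
      + exact: minj.
      + move=> E; have : Xm (fm (a, b)) by apply: (mmap).
        rewrite E => HX; exfalso; apply: (DnX _ _ HX).
        by eexists; split; [apply: (fmX _ _ Ha' Hb') | reflexivity].
      + move=> E; have : Xm (fm (a', b')) by apply: (mmap).
        rewrite -E => HX; exfalso; apply: (DnX _ _ HX).
        by eexists; split; [apply: (fmX _ _ Ha Hb) | reflexivity].
      + move=> /hinj E; have {}E := E (fmX _ _ Ha Hb) (fmX _ _ Ha' Hb').
        have [/ginj etg E2] := minj _ _ _ _ (mg _) (mmap _ _ (piX _ Ha) (piX _ Hb)) (mg _) (mmap _ _ (piX _ Ha') (piX _ Hb')) E.
        have [e1 e2] := minj _ _ _ _ (piX _ Ha) (piX _ Hb) (piX _ Ha') (piX _ Hb') E2.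
        have key t t' : X' t -> X' t' -> (Xm t <-> Xm t') -> pi t = pi t' -> t = t'.
          move=> Ht Ht' iff; rewrite /pi; case: pselect => Xt; case: pselect => Xt' //.
          + by case: Xt'; apply/iff.
          + by case: Xt; apply/iff.
          move=> ee; case: Ht => // Dt; case: Ht' => // Dt'.
          by rewrite -(hinvP _ Dt).2 -(hinvP _ Dt').2 ee.
        move: etg; rewrite /tg.
        by do 4! case: pselect => ? //; move=> _; split; apply: key => //; split => // *; exfalso; auto.
  have Rm : R m (exist _ _ g').
    apply/asboolP; split => /=; first by move=> t mt; left.
    by move=> a b Xa Xb; rewrite /f'; case: pselect => // -[].
  have /asboolP [H _] := mmax _ Rm.
  have Dh : Dn (h (g 0)) by exists (g 0); split.
  by apply: (DnX _ Dh); apply: H; right.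
pose j t := match pselect (Xm t) with left _ => fm (t, g 0) | right _ => fm (h t, g 1) end.
have jX t : B t -> Xm (j t).
  move=> Bt; rewrite /j; case: pselect => Xt; apply: (mmap) => //; exact: hA.
have jinj t t' : B t -> B t' -> j t = j t' -> t = t'.
  move=> Bt Bt'; rewrite /j; case: pselect => Xt; case: pselect => Xt' E.
  - by case: (minj _ _ _ _ Xt (mg 0) Xt' (mg 0) E).
  - by case: (minj _ _ _ _ Xt (mg 0) (hA _ (conj Bt' Xt')) (mg 1) E) => _ /ginj.
  - by case: (minj _ _ _ _ (hA _ (conj Bt Xt)) (mg 1) Xt' (mg 0) E) => _ /ginj.
  - by case: (minj _ _ _ _ (hA _ (conj Bt Xt)) (mg 1) (hA _ (conj Bt' Xt')) (mg 1) E) => /(hinj _ _ (conj Bt Xt) (conj Bt' Xt')).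
exists (fun ab => fm (j ab.1, j ab.2)); split.
  by move=> a b Ba Bb; apply: (mB); apply: (mmap); apply: (jX).
move=> a b a' b' Ba Bb Ba' Bb' /= E.
have [e1 e2] := minj _ _ _ _ (jX _ Ba) (jX _ Bb) (jX _ Ba') (jX _ Bb') E.
by split; apply: (jinj).
Qed.
End Hess.
End Card.
Section Steinitz.
Variables (F : fieldType) (V : lmodType F).

Lemma coordP (ts : seq V) c : span2 (fun t => t \in ts) c ->
  exists g : nat -> F, c = \sum_(i < size ts) g i *: ts`_i.
Proof.
case=> l [H E]; subst c; elim: l H => [|p l IH] H.
  by exists (fun _ => 0); rewrite big_nil big1 // => i _; rewrite scale0r.
rewrite big_cons; have [|g ->] := IH; first by move=> q ql; apply: H; rewrite inE ql orbT.
have pt : p.2 \in ts by apply: H; rewrite inE eqxx.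
exists (fun i => g i + (if i == index p.2 ts then p.1 else 0)).
rewrite addrC; under [in RHS]eq_bigr do rewrite scalerDl.
rewrite big_split /=; congr (_ + _).
rewrite (bigD1 (Ordinal (etrans (index_mem p.2 ts) pt))) //= eqxx nth_index //.
rewrite big1 ?addr0 // => i /negPf; rewrite -val_eqE /= => ->; exact: scale0r.
Qed.

Lemma steinitz (C : V -> Prop) (Cfree : lin_free C) (ts cs : seq V) :
  uniq cs -> (forall c, c \in cs -> C c) ->
  (forall c, c \in cs -> span2 (fun t => t \in ts) c) -> (size cs <= size ts)%N.
Proof.
move=> ucs csC csT; rewrite leqNgt; apply/negP => lt.
set n := size ts in lt *; set m := size cs in lt *.
have H : forall j : 'I_m, exists g : nat -> F, cs`_j = \sum_(i < n) g i *: ts`_i.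
  by move=> j; apply: coordP; apply: csT; apply: mem_nth.
have [G HG] := choice H.
pose A : 'M[F]_(m, n) := \matrix_(j, i) G j i.
have Hk : kermx A != 0.
  rewrite -mxrank_eq0 mxrank_ker; have := rank_leq_col A.
  by rewrite subn_eq0 -ltnNge => /leq_ltn_trans; apply.
have [j0 [i0 nz]] : exists j0 i0, kermx A j0 i0 != 0.
  apply: contra_notP (negP Hk) => NH; apply/eqP/matrixP => j i.
  by apply/eqP; apply: contra_notP NH => HH; exists j, i; apply/negP => /eqP HH2; apply: HH; apply/eqP; rewrite HH2 mxE.
pose z := row j0 (kermx A).
have zA : z *m A = 0 by rewrite /z -row_mul mulmx_ker row0.
pose zs := [seq z 0 j | j <- enum 'I_m].
have zsE (j : 'I_m) : zs`_j = z 0 j by rewrite (nth_map j) ?size_enum_ord // nth_ord_enum.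
have : lincomb cs zs = 0.
  rewrite /lincomb -/m.
  have -> : \sum_(j < m) zs`_j *: cs`_j = \sum_(j < m) z 0 j *: \sum_(i < n) G j i *: ts`_i.
    by apply: eq_bigr => j _; rewrite HG zsE.
  under eq_bigr do rewrite scaler_sumr.
  rewrite exchange_big /= big1 // => i _.
  have := congr1 (fun M : 'rV[F]_n => M 0 i) zA; rewrite !mxE => E.
  rewrite -[RHS](scale0r ts`_i) -E scaler_suml; apply: eq_bigr => j _.
  by rewrite scalerA; congr (_ * _ *: _); rewrite /A mxE.
move=> /(Cfree cs zs ucs csC) zs0.
move: nz; have := zs0 i0 (ltn_ord i0); rewrite zsE /z mxE => ->; by rewrite eqxx.
Qed.

Lemma fiber_inj (C : V -> Prop) (Cfree : lin_free C) (code : V -> seq (nat * V))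
  (dec : nat * V -> V) :
  (forall c, C c -> span2 (fun t => t \in map dec (code c)) c) ->
  exists idx : V -> nat, forall c c', C c -> C c' -> code c = code c' -> idx c = idx c' -> c = c'.
Proof.
move=> Hspan.
have Hen : forall l, exists cs : seq V, uniq cs /\ forall c, C c -> code c = l -> c \in cs.
  move=> l; pose Fl c := C c /\ code c = l.
  pose P k := `[< exists cs, [/\ uniq cs, (forall c, c \in cs -> Fl c) & size cs = k] >].
  have exP : exists k, P k by exists 0%N; apply/asboolP; exists [::].
  have ubP : forall k, P k -> (k <= size l)%N.
    move=> k /asboolP [cs [ucs csF <-]]; rewrite -(size_map dec).
    apply: (steinitz Cfree) => //; first by move=> c /csF [].
    by move=> c /csF [Cc <-]; exact: Hspan.
  case: (ex_maxnP exP ubP) => k /asboolP [cs [ucs csF sk]] kmax.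
  exists cs; split => // c Cc cl; case: (boolP (c \in cs)) => // ncs.
  have : P (size (c :: cs)).
    apply/asboolP; exists (c :: cs); split => //=; first by rewrite ucs andbT.
    by move=> c'; rewrite inE => /orP [/eqP -> //| /csF].
  by move/kmax; rewrite /= sk ltnn.
have [en Hen'] := choice Hen.
exists (fun c => index c (en (code c))) => c c' Cc Cc' e ei.
have [_ H1] := Hen' (code c); have [_ H2] := Hen' (code c').
have E1 := nth_index c (H1 c Cc erefl); have E2 := nth_index c (H2 c' Cc' erefl).
rewrite -ei -e in E2; exact: (etrans (esym E1) E2).
Qed.
End Steinitz.

Section Encode.
Variables (T : eqType) (B : T -> Prop) (g : nat -> T) (f : T * T -> T).
Hypotheses (gB : forall n, B (g n)) (ginj : injective g)
  (fmap : mapsto2 B f) (finj : injon2 B f).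

Definition Pc (p : nat * T) := f (g p.1, p.2).
Fixpoint Lr (l : seq (nat * T)) : T := if l is p :: l' then f (Pc p, Lr l') else g 0.
Definition Ec (ln : seq (nat * T) * nat) := f (g ln.2, f (g (size ln.1), Lr ln.1)).
Definition allB (l : seq (nat * T)) := forall p, p \in l -> B p.2.

Lemma Pc_B p : B p.2 -> B (Pc p). Proof. by move=> Bp; apply: fmap. Qed.
Lemma Lr_B l : allB l -> B (Lr l).
Proof.
elim: l => [|p l IH] H //=; apply: fmap; first by apply: Pc_B; apply: H; rewrite inE eqxx.
by apply: IH => q ql; apply: H; rewrite inE ql orbT.
Qed.
Lemma Ec_B ln : allB ln.1 -> B (Ec ln).
Proof. by move=> H; apply: fmap => //; apply: fmap => //; apply: Lr_B. Qed.
Lemma Lr_inj l l' : allB l -> allB l' -> size l = size l' -> Lr l = Lr l' -> l = l'.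
Proof.
elim: l l' => [|p l IH] [|p' l'] //= H H' [s] E.
have Hl : allB l by move=> q ql; apply: H; rewrite inE ql orbT.
have Hl' : allB l' by move=> q ql; apply: H'; rewrite inE ql orbT.
have Bp : B p.2 by apply: H; rewrite inE eqxx.
have Bp' : B p'.2 by apply: H'; rewrite inE eqxx.
have [E1 E2] := finj (Pc_B Bp) (Lr_B Hl) (Pc_B Bp') (Lr_B Hl') E.
have [/ginj e1 e2] := finj (gB _) Bp (gB _) Bp' E1.
by rewrite (IH l') //; congr (_ :: _); case: p p' e1 e2 {E E1 Bp Bp' H H'} => [? ?] [? ?] /= -> ->.
Qed.
Lemma Ec_inj ln ln' : allB ln.1 -> allB ln'.1 -> Ec ln = Ec ln' -> ln = ln'.
Proof.
move=> H H'; rewrite /Ec => E.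
have [/ginj e1 E2] := finj (gB _) (fmap (gB _) (Lr_B H)) (gB _) (fmap (gB _) (Lr_B H')) E.
have [/ginj e2 E3] := finj (gB _) (Lr_B H) (gB _) (Lr_B H') E2.
by case: ln ln' e1 H H' e2 E3 {E E2} => [l n] [l' n'] /= -> H H' e2 /(Lr_inj H H' e2) ->.
Qed.
End Encode.
Lemma split_facts (F : fieldType) (p : {poly F}) : split_deg2 p -> exists l a b,
  [/\ l != 0, size p = 3%N, p`_0 = l * (a * b), p`_1 = - (l * (a + b)) & p`_2 = l] /\
   (forall x, root p x <-> x = a \/ x = b) /\ poly_trace p = a + b.
Proof.
case=> sz [a [b E]]; set l := lead_coef p in E.
have l0 : l != 0 by rewrite lead_coef_eq0 -size_poly_eq0 sz.
have EQ : ('X - a%:P) * ('X - b%:P) = 'X^2 + (- (a + b)) *: 'X + (a * b)%:P :> {poly F}.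
  by rewrite -mul_polyC polyCN polyCD polyCM; ring.
have c0 : p`_0 = l * (a * b) by rewrite E EQ !coefE /=; ring.
have c1 : p`_1 = - (l * (a + b)) by rewrite E EQ !coefE /=; ring.
have c2 : p`_2 = l by rewrite E EQ !coefE /=; ring.
exists l, a, b; split => //; split.
  move=> x; rewrite /root E hornerZ hornerM !hornerXsubC mulf_eq0 (negPf l0) /=.
  rewrite mulf_eq0 !subr_eq0; split; first by case/orP => /eqP ->; [left|right].
  by case=> ->; rewrite eqxx ?orbT.
by rewrite /poly_trace sz /= -/l c1; field.
Qed.

Section Glue.
Variables (F : fieldType) (V : lmodType F).

Lemma lin_facts (u : V -> V) : linear u ->
  (forall a b, u (a + b) = u a + u b) /\ (forall k a, u (k *: a) = k *: u a).
Proof.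
move=> H.
have uD a b : u (a + b) = u a + u b by have := H 1 a b; rewrite !scale1r.
have u0 : u 0 = 0.
  have := uD 0 0; rewrite addr0 => E.
  by apply: (@addrI _ (u 0)); rewrite addr0 -E.
split => // k a; by have := H k a 0; rewrite !addr0 u0 addr0.
Qed.

Lemma quad_rel (p : {poly F}) (u : V -> V) l a b : linear u -> l != 0 -> size p = 3%N ->
  p`_0 = l * (a * b) -> p`_1 = - (l * (a + b)) -> p`_2 = l ->
  (forall v, peval_endo p u v = 0) ->
  forall v, (u (u v - a *: v) - a *: (u v - a *: v)) = (b - a) *: (u v - a *: v).
Proof.
move=> /lin_facts [uD uZ] l0 sz e0 e1 e2 H v.
have uB x y : u (x - y) = u x - u y by rewrite -scaleN1r uD uZ scaleN1r.
apply/eqP; rewrite -subr_eq0; apply/eqP.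
have : l *: (u (u v - a *: v) - a *: (u v - a *: v) - (b - a) *: (u v - a *: v)) = peval_endo p u v.
  rewrite /peval_endo sz !big_ord_recl big_ord0 /= e0 e1 e2 uB uZ.
  rewrite addr0; modring F V.
by rewrite H => /eqP; rewrite scaler_eq0 (negPf l0) /= => /eqP.
Qed.
End Glue.

Section Glue2.
Variables (F : fieldType) (V : lmodType F).

Lemma in_span_span2 (S : V -> Prop) v : in_span S v -> span2 S v.
Proof.
case=> s [c [Hs ->]]; rewrite /lincomb.
exists [seq (c`_i, s`_i) | i <- iota 0 (size s)]; split.
  move=> p /mapP [i]; rewrite mem_iota add0n => /andP [_ lt] -> /=.
  by apply: Hs; apply: mem_nth.
by rewrite big_map -(big_mkord xpredT (fun i => c`_i *: s`_i)) /index_iota subn0.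
Qed.

Lemma span2_in_span (S : V -> Prop) v : span2 S v -> in_span S v.
Proof.
case=> l [Hl ->]; exists (map snd l), (map fst l); split.
  by move=> x /mapP [p pl ->]; apply: Hl.
rewrite /lincomb size_map (big_nth (0, 0)) big_mkord; apply: eq_bigr => i _.
by rewrite !(nth_map (0, 0)).
Qed.

Lemma applyw_lin (x y : V -> V) (s : seq bool) :
  (forall u v, x (u + v) = x u + x v) -> (forall k v, x (k *: v) = k *: x v) ->
  (forall u v, y (u + v) = y u + y v) -> (forall k v, y (k *: v) = k *: y v) ->
  (forall u v, applyw x y s (u + v) = applyw x y s u + applyw x y s v) /\
  (forall k v, applyw x y s (k *: v) = k *: applyw x y s v).
Proof.
move=> xD xZ yD yZ; elim: s => [|b s [IH1 IH2]] //=.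
by case: b; split => *; rewrite ?IH1 ?IH2 ?xD ?xZ ?yD ?yZ.
Qed.

Fixpoint allw (n : nat) : seq (seq bool) :=
  if n is n'.+1 then [::] :: [seq b :: s | b <- [:: true; false], s <- allw n'] else [:: [::]].

Lemma allwP n s : (size s <= n)%N -> s \in allw n.
Proof.
elim: n s => [|n IH] [|b s] //=.
rewrite ltnS => /IH ss; rewrite inE; apply/orP; right.
rewrite !mem_cat; case: b; apply/orP; [left | right; apply/orP; left]; exact: (map_f _ ss).

Qed.

Lemma fin_or_inf (B : V -> Prop) :
  (exists s : seq V, forall b, B b -> b \in s) \/
  (exists g : nat -> V, (forall n, B (g n)) /\ injective g).
Proof.
case: (pselect (exists s : seq V, forall b, B b -> b \in s)) => [fin|nfin]; first by left.
right.
have H : forall s : seq V, exists b, B b /\ b \notin s.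
  move=> s; apply: contra_notP nfin => nex; exists s => b Bb.
  by case: (boolP (b \in s)) => // nb; case: nex; exists b.
have [pick Hp] := choice H.
pose fix pre n := if n is n'.+1 then rcons (pre n') (pick (pre n')) else [::].
exists (fun n => pick (pre n)); split; first by move=> n; case: (Hp (pre n)).
have sub m n : (m < n)%N -> pick (pre m) \in pre n.
  elim: n => [//|n IH]; rewrite ltnS leq_eqVlt => /orP [/eqP ->|lt].
    by rewrite /= mem_rcons inE eqxx.
  by rewrite /= mem_rcons inE (IH lt) orbT.
move=> m n e; case: (ltngtP m n) => // lt.
  by case: (Hp (pre n)) => _; rewrite -e (sub _ _ lt).
by case: (Hp (pre m)) => _; rewrite e (sub _ _ lt).
Qed.
End Glue2.
Unset Implicit Arguments.
Theorem theorem3 (F : fieldType) (V : lmodType F) (p1 p2 p3 : {poly F})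
    (u : V -> V) (lambda : F) :
  infinite_dim V ->
  split_deg2 p1 -> split_deg2 p2 -> split_deg2 p3 ->
  is_endo u ->
  dominant_eigenvalue u lambda ->
  endo_sum3 p1 p2 p3 u ->
  scalar_sum3 p1 p2 p3 lambda \/
  2%:R * lambda = poly_trace p1 + poly_trace p2 + poly_trace p3.
Proof.
move=> Hinf sp1 sp2 sp3 uL [B [C [HB [HC Hcard]]]]
  [u1 [u2 [u3 [[L1 L2 L3] [Hsum [P1 [P2 P3]]]]]]].
have [l1 [a1 [b1 [[l10 sz1 c10 c11 c12] [root1 tr1]]]]] := split_facts sp1.
have [l2 [a2 [b2 [[l20 sz2 c20 c21 c22] [root2 tr2]]]]] := split_facts sp2.
have [l3 [a3 [b3 [[l30 sz3 c30 c31 c32] [root3 tr3]]]]] := split_facts sp3.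
case: (pselect (scalar_sum3 p1 p2 p3 lambda)) => [|nss]; first by left.
case: (pselect (2%:R * lambda = poly_trace p1 + poly_trace p2 + poly_trace p3)) => [|ntr]; first by right.
exfalso.
have ss x1 x2 x3 : (x1 = a1 \/ x1 = b1) -> (x2 = a2 \/ x2 = b2) -> (x3 = a3 \/ x3 = b3) ->
    lambda - (x1 + x2 + x3) != 0.
  move=> h1 h2 h3; rewrite subr_eq0; apply/eqP => E; apply: nss.
  by exists x1, x2, x3; split => //; split; [apply/root1 | apply/root2 | apply/root3].
have [u1D u1Z] := lin_facts L1.
have [u2D u2Z] := lin_facts L2.
have [u3D u3Z] := lin_facts L3.
have [uD uZ] := lin_facts uL.
pose e1 v := u1 v - a1 *: v.
pose e2 v := u2 v - a2 *: v.
pose e3 v := u3 v - a3 *: v.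
pose w v := u v - lambda *: v.
have e1D x y : e1 (x + y) = e1 x + e1 y by rewrite /e1 u1D; modring F V.
have e1Z k x : e1 (k *: x) = k *: e1 x by rewrite /e1 u1Z; modring F V.
have e2D x y : e2 (x + y) = e2 x + e2 y by rewrite /e2 u2D; modring F V.
have e2Z k x : e2 (k *: x) = k *: e2 x by rewrite /e2 u2Z; modring F V.
have hx v : e1 (e1 v) = (b1 - a1) *: e1 v := quad_rel L1 l10 sz1 c10 c11 c12 P1 v.
have hy v : e2 (e2 v) = (b2 - a2) *: e2 v := quad_rel L2 l20 sz2 c20 c21 c22 P2 v.
have hz v : e3 (e3 v) = (b3 - a3) *: e3 v := quad_rel L3 l30 sz3 c30 c31 c32 P3 v.
have hzdef v : e3 v = (lambda - a1 - a2 - a3) *: v - e1 v - e2 v + w v.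
  by rewrite /e1 /e2 /e3 /w Hsum; modring F V.
have HM v : M e1 e2 w 4 v.
  apply: (S4 e1D e1Z e2D e2Z hx hy hz hzdef).
  - apply: contra_notN ntr => /eqP E; rewrite tr1 tr2 tr3.
    by apply/eqP; rewrite -subr_eq0 -oppr_eq0 -E; apply/eqP; ring.
  - have H := mulf_neq0 (ss b1 b2 a3 (or_intror erefl) (or_intror erefl) (or_introl erefl))
                         (ss b1 b2 b3 (or_intror erefl) (or_intror erefl) (or_intror erefl)).
    by apply: contra_neq H => E; rewrite -E; ring.
  - have H := mulf_neq0 (ss b1 a2 a3 (or_intror erefl) (or_introl erefl) (or_introl erefl))
                         (ss b1 a2 b3 (or_intror erefl) (or_introl erefl) (or_intror erefl)).
    by apply: contra_neq H => E; rewrite -E; ring.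
  - have H := mulf_neq0 (ss a1 b2 a3 (or_introl erefl) (or_intror erefl) (or_introl erefl))
                         (ss a1 b2 b3 (or_introl erefl) (or_intror erefl) (or_intror erefl)).
    by apply: contra_neq H => E; rewrite -E; ring.
  - have H := mulf_neq0 (ss a1 a2 a3 (or_introl erefl) (or_introl erefl) (or_introl erefl))
                         (ss a1 a2 b3 (or_introl erefl) (or_introl erefl) (or_intror erefl)).
    by apply: contra_neq H => E; rewrite -E; ring.
case: HB => HBim [Bfree HBsp].
case: HC => _ [Cfree _].
have aD s := (applyw_lin s e1D e1Z e2D e2Z).1.
have aZ s := (applyw_lin s e1D e1Z e2D e2Z).2.
pose tm t := exists s b, (size s <= 4)%N /\ B b /\ t = applyw e1 e2 s b.
have Hspan v : span2 tm v.
  apply: (span2_trans _ (HM v)) => t [s [v' [ss' ->]]].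
  have : span2 B (w v') by apply: in_span_span2; apply: HBsp; exists v'.
  apply: (span2_lin (aD s) (aZ s)) => b Bb; apply: span2_in.
  by exists s, b.
case: (fin_or_inf B) => [[s Bs]|[g [gB ginj]]].
  apply: Hinf; exists [seq applyw e1 e2 ws b | ws <- allw 4, b <- s] => v.
  apply: span2_in_span; apply: (span2_trans _ (Hspan v)) => t [ws [b [sz [Bb ->]]]].
  apply: span2_in; apply/allpairsP; exists (ws, b); split; [exact: allwP sz | exact: Bs Bb | by []].
have [f [fmap finj]] := hessenberg gB ginj.
have Hch : forall t, exists sb : seq bool * V, tm t ->
    [/\ (size sb.1 <= 4)%N, B sb.2 & t = applyw e1 e2 sb.1 sb.2].
  move=> t; case: (pselect (tm t)) => [[s [b [H1 [H2 H3]]]]|nt].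
    by exists (s, b).
  by exists ([::], t).
have [ch Hch'] := choice Hch.
pose dec (p : nat * V) := applyw e1 e2 (odflt [::] (unpickle p.1)) p.2.
have Hcode : forall c, exists l : seq (nat * V), allB B l /\ span2 (fun t => t \in map dec l) c.
  move=> c; have [lp [Hlp Ec]] := Hspan c.
  exists [seq (pickle (ch p.2).1, (ch p.2).2) | p <- lp]; split.
    by move=> q /mapP [p plp ->] /=; have [] := Hch' _ (Hlp _ plp).
  exists lp; split => // p plp; apply/mapP.
  exists (pickle (ch p.2).1, (ch p.2).2); first by apply: (map_f (fun p => (pickle (ch p.2).1, (ch p.2).2))).
  change (p.2 = applyw e1 e2 (odflt [::] (unpickle (pickle (ch p.2).1))) (ch p.2).2); rewrite pickleK.
  by case: (Hch' _ (Hlp _ plp)) => _ _ E; exact: E.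
have [code Hcode'] := choice Hcode.
have [idx Hidx] := fiber_inj Cfree (code := code) (dec := dec) (fun c _ => (Hcode' c).2).
apply: Hcard; exists (fun c => Ec g f (code c, idx c)); split.
  by move=> c _; apply: (Ec_B gB fmap); exact: (Hcode' c).1.
move=> c c' Cc Cc' E.
have := @Ec_inj V B g f gB ginj fmap finj (code c, idx c) (code c', idx c') (Hcode' c).1 (Hcode' c').1 E.
by case=> e1' e2'; apply: Hidx.
Qed.
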